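(* Consider the boundary driven Kawasaki process on $\{0,1\}^N$ with $N\geq 5$ and $\mu_L>\kappa>0>\mu_R$, $|\mu_R|>\kappa$. Let $x\in\mathcal{P}$. If $U(x,y)=0$, then $y\in\mathcal{E}$, and moreover $U(y,z)=0$ implies $z=x$.
   Context: Configurations $x\in\{0,1\}^N$; energy $E(x)=-\kappa\sum_{i=1}^{N-1}x(i)x(i+1)$. $x^{i,j}$: occupations of $i,j$ exchanged; $x^i$ ($i\in\{1,N\}$): occupation of $i$ flipped. Transitions: for $|i-j|=1$, $x(i)\neq x(j)$, $x\to x^{i,j}$ at rate $\exp[-\frac\beta2(E(x^{i,j})-E(x))]$; for $i\in\{1,N\}$, $x\to x^i$ at rate $\exp[\frac{\beta\mu_i}{2}(1-2x(i))]\exp[-\frac\beta2(E(x^i)-E(x))]$, $\mu_1=\mu_L$, $\mu_N=\mu_R$. For an allowed transition $x\to y$ let $\phi(x,y)=\lim_{\beta\to\infty}\frac1\beta\log k(x\to y)$, $\Gamma(x)=-\max_y\phi(x,y)$, $U(x,y)=-\phi(x,y)-\Gamma(x)\geq0$. A configuration is written by its blocks $x=(p_0,q_0,\dots,p_n,q_n)$: reading from site 1, $p_0$ consecutive occupied sites, then $q_0$ vacant sites, then $p_1$ occupied, etc., with $\sum_i(p_i+q_i)=N$. $\mathcal{P}$ is the set of configurations $(p_0,q_0,\dots,p_n,q_n)$ with $p_i\geq 3$ for all $i$, $q_i\geq 3$ for all $i<n$, and $q_n\geq 2$. $\mathcal{E}$ is the set of configurations obtained from some $x\in\mathcal{P}$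 by a single nearest-neighbour exchange that either turns a local pattern $\dots 11100\dots$ (right end of an occupied block) into $\dots 11010\dots$, or turns a local pattern $\dots 000111\dots$ (left end of an occupied block) into $\dots 001011\dots$. *)

(* Defs.v *)
From HB Require Import structures.
From mathcomp Require Import all_boot all_order all_algebra.
From mathcomp Require Import all_classical all_reals all_analysis.
Set Implicit Arguments. Unset Strict Implicit. Unset Printing Implicit Defensive.
Import Order.TTheory GRing.Theory Num.Theory.
Import numFieldNormedType.Exports.
Local Open Scope ring_scope.

(* Sites 1..N of the paper are the indices 0..N-1 here. *)
Definition config (N : nat) := {ffun 'I_N -> bool}.

Section Kawasaki.
Variables (R : realType) (N : nat).

(* occupation of site j (0-based); false outside the chain (never used there) *)
Definition occ (x : config N) (j : nat) : bool :=
  if insub j is Some i then x i else false.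

Definition swap (x : config N) (j : nat) : config N :=
  [ffun i : 'I_N => if val i == j then occ x j.+1
                    else if val i == j.+1 then occ x j else x i].

Definition flip (x : config N) (j : nat) : config N :=
  [ffun i : 'I_N => if val i == j then ~~ occ x j else x i].

Definition b2R (b : bool) : R := (b : nat)%:R.

Definition energy (kappa : R) (x : config N) : R :=
  - kappa * \sum_(0 <= i < N.-1) b2R (occ x i) * b2R (occ x i.+1).

Definition rate (kappa muL muR beta : R) (x y : config N) : R :=
  \sum_(i < N.-1 | (occ x i != occ x i.+1) && (swap x i == y))
     expR (- (beta / 2) * (energy kappa (swap x i) - energy kappa x))
  + (if flip x 0 == y then
       expR (beta * muL / 2 * (1 - 2 * b2R (occ x 0))) *
       expR (- (beta / 2) * (energy kappa (flip x 0) - energy kappa x))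
     else 0)
  + (if flip x N.-1 == y then
       expR (beta * muR / 2 * (1 - 2 * b2R (occ x N.-1))) *
       expR (- (beta / 2) * (energy kappa (flip x N.-1) - energy kappa x))
     else 0).

Definition allowed (x y : config N) : bool :=
  [exists i : 'I_N.-1, (occ x i != occ x i.+1) && (swap x i == y)]
  || (flip x 0 == y) || (flip x N.-1 == y).

Definition phi (kappa muL muR : R) (x y : config N) : R :=
  lim ((ln (rate kappa muL muR beta x y) / beta) @[beta --> +oo])%classic.

(* Gamma(x) = - max_{y allowed} phi(x,y).  The max is over the nonempty finite
   set of allowed y; the seed phi(x, x^1) is itself one of the maximised values
   (the flip at site 1 is always allowed). *)
Definition Gamma (kappa muL muR : R) (x : config N) : R :=
  - \big[Num.max/phi kappa muL muR x (flip x 0)]_(y | allowed x y)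
        phi kappa muL muR x y.

Definition U (kappa muL muR : R) (x y : config N) : R :=
  - phi kappa muL muR x y - Gamma kappa muL muR x.

End Kawasaki.

Section Blocks.
Variable N : nat.

Definition occ_seq (x : config N) : seq bool := [seq occ x i | i <- iota 0 N].

Definition of_blocks (s : seq (nat * nat)) : seq bool :=
  flatten [seq nseq pq.1 true ++ nseq pq.2 false | pq <- s].

Definition in_calP (x : config N) : Prop :=
  exists s : seq (nat * nat),
    [/\ s != [::], occ_seq x = of_blocks s,
        (forall i, i < size s -> 3 <= (nth (0, 0) s i).1)%N,
        (forall i, i.+1 < size s -> 3 <= (nth (0, 0) s i).2)%N
      & (2 <= (nth (0, 0) s (size s).-1).2)%N].

Definition in_calE (y : config N) : Prop :=
  exists x : config N, in_calP x /\ exists j : nat,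
    (* ...11100... -> ...11010... at sites j-2..j+2 (exchange of j, j+1) *)
    ([/\ (2 <= j)%N, (j + 2 < N)%N,
         [&& occ x (j - 2), occ x (j - 1), occ x j,
             ~~ occ x j.+1 & ~~ occ x j.+2]
       & y = swap x j]
    \/
    (* ...000111... -> ...001011... at sites j-2..j+3 (exchange of j, j+1) *)
     [/\ (2 <= j)%N, (j + 3 < N)%N,
         [&& ~~ occ x (j - 2), ~~ occ x (j - 1), ~~ occ x j,
             occ x j.+1, occ x j.+2 & occ x j.+3]
       & y = swap x j]).

End Blocks.

(* Main.v *)
Require Import Defs.
From HB Require Import structures.
From mathcomp Require Import all_boot all_order all_algebra.
From mathcomp Require Import all_classical all_reals all_analysis.
From mathcomp Require Import zify ring lra.
Import Order.TTheory GRing.Theory Num.Theory.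
Import numFieldNormedType.Exports.
Local Open Scope ring_scope.

Ltac nlia := repeat match goal with H : _ |- _ => clear H end; lia.

Lemma sum_win (n : nat) (F G : nat -> nat) (w : nat -> bool) :
  (forall k, ~~ w k -> G k = F k) ->
  (\sum_(0 <= k < n) G k + \sum_(0 <= k < n) w k * F k =
   \sum_(0 <= k < n) F k + \sum_(0 <= k < n) w k * G k)%N.
Proof.
move=> h; elim: n => [|n IH]; first by rewrite !big_geq.
rewrite !big_nat_recr //=.
case: (boolP (w n)) => wn.
  rewrite mul1n. lia.
rewrite (h _ wn) !mul0n. lia.
Qed.

Lemma sum_ind1 (n c : nat) (F : nat -> nat) :
  (\sum_(0 <= k < n) (k == c) * F k = (c < n) * F c)%N.
Proof.
elim: n => [|n IH]; first by rewrite big_geq.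
rewrite big_nat_recr //= IH.
case: (ltngtP c n) => h.
- by rewrite (ltn_trans h (ltnSn n)) mul0n addn0.
- by rewrite ltnS leqNgt h.
- by subst c; rewrite ltnSn.
Qed.

Lemma sum_indW (n : nat) (W : seq nat) (F : nat -> nat) : uniq W ->
  (\sum_(0 <= k < n) (k \in W) * F k = \sum_(c <- W) (c < n) * F c)%N.
Proof.
elim: W => [|c W IH] /=.
  by move=> _; rewrite big_nil big1 // => k _; rewrite in_nil.
move=> /andP [cW uW].
rewrite big_cons -IH // -sum_ind1 -big_split /=.
apply: eq_bigr => k _; rewrite in_cons.
case: eqVneq => [->|]; last by rewrite /= mul0n.
by rewrite (negPf cW) mul1n mul0n addn0.
Qed.

Section Comb.
Variable N : nat.
Implicit Types x y : config N.

Definition S x : nat := \sum_(0 <= k < N.-1) (occ x k && occ x k.+1).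

Lemma occ_ge x k : (N <= k)%N -> occ x k = false.
Proof. by move=> h; rewrite /occ insubN // -leqNgt. Qed.

Lemma occ_lt x k (h : (k < N)%N) : occ x k = x (Ordinal h).
Proof. by rewrite /occ insubT. Qed.

Lemma occ_ord x (i : 'I_N) : occ x i = x i.
Proof. by rewrite /occ valK. Qed.

Lemma config_eq x y : (forall k, (k < N)%N -> occ x k = occ y k) -> x = y.
Proof.
move=> h; apply/ffunP => i.
by rewrite -!occ_ord h.
Qed.

Lemma occ_swap x j k : (j.+1 < N)%N ->
  occ (swap x j) k = if k == j then occ x j.+1 else if k == j.+1 then occ x j else occ x k.
Proof.
move=> hj; case: (ltnP k N) => hk.
  by rewrite occ_lt ffunE /= -(occ_lt x _ hk).
have -> : (k == j) = false by apply/eqP; lia.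
have -> : (k == j.+1) = false by apply/eqP; lia.
by rewrite !occ_ge.
Qed.

Lemma occ_flip x j k : (j < N)%N ->
  occ (flip x j) k = if k == j then ~~ occ x j else occ x k.
Proof.
move=> hj; case: (ltnP k N) => hk.
  by rewrite occ_lt ffunE /= -(occ_lt x _ hk).
have -> : (k == j) = false by apply/eqP; lia.
by rewrite !occ_ge.
Qed.


Lemma nSn n : (n == n.+1) = false. Proof. by elim: n. Qed.
Lemma Snn n : (n.+1 == n) = false. Proof. by elim: n. Qed.
Lemma nSSn n : (n == n.+2) = false. Proof. by elim: n. Qed.
Lemma SSnn n : (n.+2 == n) = false. Proof. by elim: n. Qed.
Lemma nSSSn n : (n == n.+3) = false. Proof. by elim: n. Qed.
Definition neqs := (nSn, Snn, nSSn, SSnn, nSSSn, eqxx).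

Lemma S_local x y (W : seq nat) : uniq W ->
  (forall k, k \notin W -> (occ y k && occ y k.+1) = (occ x k && occ x k.+1)) ->
  (S y + \sum_(c <- W) (c < N.-1) * (occ x c && occ x c.+1) =
   S x + \sum_(c <- W) (c < N.-1) * (occ y c && occ y c.+1))%N.
Proof.
move=> uW h; rewrite /S -!sum_indW //; apply: sum_win => k.
by move=> /h ->.
Qed.

Lemma S_swap x j : (j.+1 < N)%N ->
  (S (swap x j) + (0 < j) * (occ x j.-1 && occ x j) + (occ x j && occ x j.+1)
    + (occ x j.+1 && occ x j.+2) =
   S x + (0 < j) * (occ x j.-1 && occ x j.+1) + (occ x j.+1 && occ x j)
    + (occ x j && occ x j.+2))%N.
Proof.
move=> hj.
have e2 : (j.+1 < N.-1)%N = false -> occ x j.+2 = false.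
  by move=> h; rewrite occ_ge //; lia.
case: j hj e2 => [|j] hj e2.
  have hyp : forall k, k \notin [:: 0; 1]%N -> (occ (swap x 0) k && occ (swap x 0) k.+1) = (occ x k && occ x k.+1).
    move=> k; rewrite !inE negb_or => /andP [/negPf k0 /negPf k1].
    rewrite !occ_swap // k0 k1; case: k k0 k1 => [|[|k]] //.
  have H := @S_local x (swap x 0) [:: 0; 1]%N isT hyp.
  rewrite !big_cons !big_nil /= !occ_swap //= ?neqs /= in H.
  move: H; have -> : (0 < N.-1)%N by lia.
  case: (boolP (1 < N.-1)%N) => h1; first by
    case: (occ x 0) (occ x 1) (occ x 2) => [] [] [] /=; lia.
  rewrite (e2 (negPf h1)).
  by case: (occ x 0) (occ x 1) => [] [] /=; lia.
have hyp : forall k, k \notin [:: j; j.+1; j.+2] -> (occ (swap x j.+1) k && occ (swap x j.+1) k.+1) = (occ x k && occ x k.+1).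
    move=> k; rewrite !inE !negb_or => /andP [/negPf k0 /andP [/negPf k1 /negPf k2]].
    by rewrite !occ_swap // k1 k2 eqSS k0 eqSS k1.
have H := @S_local x (swap x j.+1) [:: j; j.+1; j.+2] _ hyp.
rewrite !big_cons !big_nil /= !occ_swap //= ?neqs /= in H.
move: H; rewrite !inE !neqs /= => H.
move: H; have -> : (j < N.-1)%N by lia.
have -> : (j.+1 < N.-1)%N by lia.
case: (boolP (j.+2 < N.-1)%N) => h1; first by
  case: (occ x j) (occ x j.+1) (occ x j.+2) (occ x j.+3) => [] [] [] [] /=; lia.
rewrite (e2 (negPf h1)).
by case: (occ x j) (occ x j.+1) (occ x j.+2) (occ x j.+3) => [] [] [] [] /=; lia.
Qed.

Lemma S_flip0 x : (1 < N)%N ->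
  (S (flip x 0) + (occ x 0 && occ x 1) = S x + (~~ occ x 0 && occ x 1))%N.
Proof.
move=> hN.
have hyp : forall k, k \notin [:: 0]%N -> (occ (flip x 0) k && occ (flip x 0) k.+1) = (occ x k && occ x k.+1).
  move=> k; rewrite !inE => /negPf k0.
  by rewrite !occ_flip ?k0 //; lia.
have H := @S_local x (flip x 0) [:: 0]%N isT hyp.
rewrite !big_cons !big_nil /= !occ_flip //= ?neqs /= in H; try lia.
Qed.

Lemma S_flipN x : (1 < N)%N ->
  (S (flip x N.-1) + (occ x N.-2 && occ x N.-1) = S x + (occ x N.-2 && ~~ occ x N.-1))%N.
Proof.
move=> hN.
have hyp : forall k, k \notin [:: N.-2]%N -> (occ (flip x N.-1) k && occ (flip x N.-1) k.+1) = (occ x k && occ x k.+1).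
  move=> k; rewrite !inE => /negP k0.
  have hN1 : (N.-1 < N)%N by lia.
  rewrite !occ_flip //.
  case: (ltnP k.+1 N) => hk.
    have -> : (k == N.-1) = false by apply/eqP; lia.
    have -> : (k.+1 == N.-1) = false by apply/eqP => e; apply: k0; apply/eqP; lia.
    by [].
  rewrite (occ_ge x _ hk) !andbF.
  have -> : (k.+1 == N.-1) = false by apply/eqP; lia.
  by rewrite andbF.
have H := @S_local x (flip x N.-1) [:: N.-2]%N isT hyp.
have hN1 : (N.-1 < N)%N by lia.
rewrite !big_cons !big_nil /= !occ_flip // in H.
move: H; have -> : (N.-2 < N.-1)%N by lia.
have -> : (N.-2 == N.-1) = false by apply/eqP; lia.
have -> : (N.-2.+1 == N.-1) by apply/eqP; lia.
have -> : N.-2.+1 = N.-1 by lia.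
by rewrite !mul1n !addn0.
Qed.

End Comb.
Arguments S {N} x.
Arguments occ_ge {N} x k _.
Arguments occ_lt {N} x k _.
Arguments occ_ord {N} x i.
Arguments config_eq {N} x y _.
Arguments occ_swap {N} x j k _.
Arguments occ_flip {N} x j k _.
Arguments S_swap {N} x j _.
Arguments S_flip0 {N} x _.
Arguments S_flipN {N} x _.

Lemma lim_const_exp (R : realType) (c : R) :
  lim ((ln (expR (beta * c)) / beta) @[beta --> +oo])%classic = c.
Proof.
apply: cvg_lim => //.
apply: cvg_near_cst.
near=> b.
rewrite expRK mulrAC divff ?mul1r //.
apply: lt0r_neq0.
near: b. by exists 0.
Unshelve. all: end_near.
Qed.

Section Real.
Variables (R : realType) (N : nat) (kappa muL muR : R).
Implicit Types x y : config N.

Lemma b2R_and a b : b2R R a * b2R R b = b2R R (a && b).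
Proof. by case: a; case: b; rewrite /b2R /= ?mul1r ?mul0r. Qed.

Lemma energyE x : energy kappa x = - kappa * (S x)%:R.
Proof.
rewrite /energy /S natr_sum; congr (_ * _); apply: eq_bigr => i _.
by rewrite b2R_and.
Qed.

Lemma swap_inj x i i' : (i.+1 < N)%N -> (i'.+1 < N)%N ->
  occ x i != occ x i.+1 -> occ x i' != occ x i'.+1 -> swap x i = swap x i' -> i = i'.
Proof.
move=> hi hi' di di' e.
have key : forall i i', (i.+1 < N)%N -> (i'.+1 < N)%N -> occ x i != occ x i.+1 ->
   occ x i' != occ x i'.+1 -> swap x i = swap x i' -> (i < i')%N -> False.
  clear; move=> i i' hi hi' di di' e lt.
  have := congr1 (fun z => occ z i) e.
  rewrite !occ_swap // eqxx.
  have -> : (i == i') = false by apply/eqP; lia.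
  have -> : (i == i'.+1) = false by apply/eqP; lia.
  by move=> /eqP; rewrite eq_sym (negPf di).
case: (ltngtP i i') => // h; first by case: (key _ _ hi hi' di di' e h).
by case: (key _ _ hi' hi di' di (esym e) h).
Qed.

Lemma flip0_swap x i : (i.+1 < N)%N -> occ x i != occ x i.+1 -> flip x 0 != swap x i.
Proof.
move=> hi di; apply/eqP => e.
have := congr1 (fun z => occ z i.+1) e.
rewrite occ_swap // occ_flip; last lia.
by rewrite eqxx (gtn_eqF (ltnSn i)) => /eqP; rewrite eq_sym (negPf di).
Qed.

Lemma flipN_swap x i : (i.+1 < N)%N -> occ x i != occ x i.+1 -> flip x N.-1 != swap x i.
Proof.
move=> hi di; apply/eqP => e.
have := congr1 (fun z => occ z i) e.
rewrite occ_swap // occ_flip; last lia.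
have -> : (i == N.-1) = false by apply/eqP; lia.
by rewrite eqxx => /eqP; rewrite (negPf di).
Qed.

Lemma flip0_flipN x : (1 < N)%N -> flip x 0 != flip x N.-1.
Proof.
move=> hN; apply/eqP => e.
have := congr1 (fun z => occ z 0) e.
rewrite !occ_flip; try lia.
have -> : (0 == N.-1) = false by apply/eqP; lia.
by rewrite eqxx; case: (occ x 0).
Qed.

Lemma rate_swap x j beta : (j.+1 < N)%N -> occ x j != occ x j.+1 ->
  rate kappa muL muR beta x (swap x j) =
  expR (beta * (kappa / 2 * ((S (swap x j))%:R - (S x)%:R))).
Proof.
move=> hj dj.
have hj' : (j < N.-1)%N by lia.
rewrite /rate (big_pred1 (Ordinal hj')) /=; last first.
  move=> i /=; apply/idP/idP.
    move=> /andP [di /eqP e]; apply/eqP; apply: val_inj => /=.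
    have hi : (i.+1 < N)%N by have := ltn_ord i; lia.
    exact: (swap_inj _ _ _ hi hj di dj e).
  by move/eqP => -> /=; rewrite dj eqxx.
rewrite (negPf (flip0_swap _ _ hj dj)) (negPf (flipN_swap _ _ hj dj)) !addr0 !energyE.
by congr expR; ring.
Qed.

Lemma rate_flip0 x beta : (1 < N)%N ->
  rate kappa muL muR beta x (flip x 0) =
  expR (beta * (muL / 2 * (1 - 2 * b2R R (occ x 0)) +
     kappa / 2 * ((S (flip x 0))%:R - (S x)%:R))).
Proof.
move=> hN.
rewrite /rate big_pred0; last first.
  move=> i /=; apply/negP => /andP [di /eqP e].
  have hi : (i.+1 < N)%N by have := ltn_ord i; lia.
  by have := flip0_swap _ _ hi di; rewrite e eqxx.
rewrite eqxx eq_sym (negPf (flip0_flipN x hN)) add0r addr0 !energyE -expRD.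
by congr expR; ring.
Qed.

Lemma rate_flipN x beta : (1 < N)%N ->
  rate kappa muL muR beta x (flip x N.-1) =
  expR (beta * (muR / 2 * (1 - 2 * b2R R (occ x N.-1)) +
     kappa / 2 * ((S (flip x N.-1))%:R - (S x)%:R))).
Proof.
move=> hN.
rewrite /rate big_pred0; last first.
  move=> i /=; apply/negP => /andP [di /eqP e].
  have hi : (i.+1 < N)%N by have := ltn_ord i; lia.
  by have := flipN_swap _ _ hi di; rewrite e eqxx.
rewrite eqxx (negPf (flip0_flipN x hN)) add0r add0r !energyE -expRD.
by congr expR; ring.
Qed.

Lemma phi_of x y c : (forall b, rate kappa muL muR b x y = expR (b * c)) ->
  phi kappa muL muR x y = c.
Proof.
move=> h; rewrite /phi.
have -> : (fun beta => ln (rate kappa muL muR beta x y) / beta) =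
          (fun beta => ln (expR (beta * c)) / beta).
  by apply: funext => b; rewrite h.
exact: lim_const_exp.
Qed.

End Real.

Lemma bigmax_eq (R : realType) (T : finType) (P : pred T) (F : T -> R) (s M : R) (y0 : T) :
  s <= M -> (forall y, P y -> F y <= M) -> P y0 -> F y0 = M ->
  \big[Num.max/s]_(y | P y) F y = M.
Proof.
move=> sM hF Py0 Fy0; apply/eqP; rewrite eq_le; apply/andP; split.
  apply: (big_ind (fun v => v <= M)) => //.
    by move=> a b ha hb; rewrite ge_max ha hb.
have : y0 \in index_enum T by rewrite mem_index_enum.
rewrite unlock.
elim: (index_enum T) => [//|t r IH] /=.
rewrite inE => /orP [/eqP <-|].
  by rewrite Py0 le_max Fy0 lexx.
move=> /IH h; case: (P t) => //; by rewrite le_max h orbT.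
Qed.

Definition bad4 (a b c d : bool) : bool :=
  ((a != b) && (b != c)) || ((a != b) && (b == c) && (c != d)).

Fixpoint ok (l : seq bool) : bool :=
  if l is a :: t then ~~ bad4 a (nth false t 0) (nth false t 1) (nth false t 2) && ok t
  else true.

Lemma ok_nth l : ok l -> forall i,
  ~~ bad4 (nth false l i) (nth false l i.+1) (nth false l i.+2) (nth false l i.+3).
Proof.
elim: l => [|a t IH] /=.
  by move=> _ i; rewrite !nth_nil.
move=> /andP [h1 h2] [|i] //=.
exact: IH.
Qed.

Definition cond (b : bool) (t : seq bool) : bool :=
  (t == [::]) || (take 3 t == nseq 3 (~~ b)) || (b && (t == [:: false; false])).

Lemma ok_nseq p b t : ok t -> cond b t -> ok (nseq p b ++ t).
Proof.
move=> hok hc; elim: p => [//|p IH] /=.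
rewrite IH andbT.
case: p {IH} => [|p] /=; last by rewrite /bad4 eqxx.
move: hc; rewrite /cond.
case: t hok => [|c1 [|c2 [|c3 t]]] _; case: b => //=; try by case: c1.
- by case: c1; case: c2.
- by case: c1; case: c2.
- by case: c1; case: c2; case: c3.
- by case: c1; case: c2; case: c3.
Qed.

Lemma of_blocks_cons p q s :
  of_blocks ((p, q) :: s) = nseq p true ++ (nseq q false ++ of_blocks s).
Proof. by rewrite /of_blocks /= catA. Qed.

Lemma take3_nseq p (b : bool) (t : seq bool) : (3 <= p)%N -> take 3 (nseq p b ++ t) = nseq 3 b.
Proof. by case: p => [|[|[|p]]] //= _; rewrite take0. Qed.

Lemma ok_blocks s :
  (forall i, (i < size s)%N -> (3 <= (nth (0, 0) s i).1)%N) ->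
  (forall i, (i.+1 < size s)%N -> (3 <= (nth (0, 0) s i).2)%N) ->
  (2 <= (nth (0, 0) s (size s).-1).2)%N -> ok (of_blocks s).
Proof.
elim: s => [//|[p q] s IH] hp hq hl.
rewrite of_blocks_cons.
have p3 : (3 <= p)%N by exact: (hp 0%N isT).
case: s IH hp hq hl => [|[p' q'] s] IH hp hq hl.
  rewrite /= in hl.
  apply: ok_nseq; first by apply: ok_nseq.
  rewrite /cond cats0; move: hl; clear; case: q => [|[|[|q]]] //= _; by rewrite take0.
apply: ok_nseq.
  apply: ok_nseq.
    apply: IH.
    - by move=> i hi; apply: (hp i.+1).
    - by move=> i hi; apply: (hq i.+1).
    - by move: hl.
  rewrite /cond of_blocks_cons take3_nseq ?eqxx ?orbT //.
  exact: (hp 1%N isT).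
rewrite /cond take3_nseq ?eqxx ?orbT //.
exact: (hq 0%N isT).
Qed.

Lemma nth_tail (u : seq bool) p q i : (size u + p <= i)%N ->
  nth false (u ++ (nseq p true ++ nseq q false)) i = false.
Proof.
move=> h; rewrite nth_cat ltnNge (leq_trans (leq_addr p _) h) /=.
rewrite nth_cat size_nseq ltnNge.
have -> : (p <= i - size u)%N by lia.
by rewrite /= nth_nseq; case: ifP.
Qed.

Section Facts.
Variable N : nat.
Implicit Types x y : config N.

Lemma occ_seq_nth x i : nth false (occ_seq x) i = occ x i.
Proof.
rewrite /occ_seq; case: (ltnP i N) => hi.
  by rewrite (nth_map 0%N) ?size_iota // nth_iota.
by rewrite nth_default ?size_map ?size_iota // occ_ge.
Qed.

Lemma size_occ_seq x : size (occ_seq x) = N.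
Proof. by rewrite /occ_seq size_map size_iota. Qed.

Definition Pfacts x := [/\ occ x 0 && occ x 1 && occ x 2, ~~ occ x N.-1 && ~~ occ x N.-2
  & forall i, ~~ bad4 (occ x i) (occ x i.+1) (occ x i.+2) (occ x i.+3)].

Lemma calP_facts x : in_calP x -> Pfacts x.
Proof.
move=> [s [sne hs hp hq hl]].
have hok := ok_blocks _ hp hq hl.
rewrite -hs in hok.
have hpat := ok_nth _ hok.
have hhead : forall i, (i < 3)%N -> occ x i.
  case: s sne hs hp {hq hl hok hpat} => [//|[p q] s] _ hs hp i hi.
  have p3 : (3 <= p)%N by exact: (hp 0%N isT).
  rewrite -occ_seq_nth hs of_blocks_cons nth_cat size_nseq.
  have -> : (i < p)%N by lia.
  by rewrite nth_nseq; have -> : (i < p)%N by lia.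
have htail : forall i, (N.-2 <= i)%N -> ~~ occ x i.
  clear hok hpat hhead; case/lastP: s sne hs hp hq hl => [//|s [p q]] _ hs hp hq hl i hi.
  rewrite size_rcons /= nth_rcons ltnn eqxx /= in hl.
  have hsz := size_occ_seq x.
  rewrite /of_blocks map_rcons -cats1 flatten_cat /= cats0 in hs.
  rewrite hs in hsz.
  rewrite size_cat size_cat !size_nseq in hsz.
  rewrite -occ_seq_nth hs nth_tail //; lia.
split.
- by rewrite !hhead.
- by rewrite !htail //; lia.
- by move=> i; rewrite -!occ_seq_nth.
Qed.

End Facts.
Arguments Pfacts {N} x.
Arguments calP_facts {N} x _.

Section Main.
Variables (R : realType) (N : nat) (kappa muL muR : R).
Implicit Types x y : config N.

Lemma b2RT : b2R R true = 1. Proof. by rewrite /b2R. Qed.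
Lemma b2RF : b2R R false = 0. Proof. by rewrite /b2R. Qed.

Definition dl (p u v w : bool) : R :=
  b2R R (p && v) + b2R R (v && u) + b2R R (u && w)
  - b2R R (p && u) - b2R R (u && v) - b2R R (v && w).

Definition up (p u v w : bool) : bool :=
  (u && ~~ v && w && ~~ p) || (~~ u && v && p && ~~ w).

Lemma dl_le1 p u v w : u != v -> dl p u v w <= 1.
Proof. by rewrite /dl; case: p; case: u; case: v; case: w; rewrite //= ?b2RT ?b2RF; lra. Qed.

Lemma dl_eq1 p u v w : dl p u v w = 1 -> up p u v w.
Proof. by rewrite /dl; case: p; case: u; case: v; case: w; rewrite //= ?b2RT ?b2RF; lra. Qed.

Lemma phi_swap x j : (j.+1 < N)%N -> occ x j != occ x j.+1 ->
  phi kappa muL muR x (swap x j) =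
  kappa / 2 * dl ((0 < j)%N && occ x j.-1) (occ x j) (occ x j.+1) (occ x j.+2).
Proof.
move=> hj dj.
rewrite (@phi_of R N kappa muL muR _ _ (kappa / 2 * ((S (swap x j))%:R - (S x)%:R))); last first.
  by move=> b; rewrite rate_swap.
congr (_ * _).
have e := congr1 (fun n : nat => n%:R : R) (S_swap x j hj).
rewrite /= !natrD !mulnb in e.
rewrite /dl /b2R; move: e; rewrite -!andbA; lra.
Qed.

Lemma phi_flip0 x : (1 < N)%N ->
  phi kappa muL muR x (flip x 0) =
  muL / 2 * (1 - 2 * b2R R (occ x 0)) +
  kappa / 2 * (b2R R (~~ occ x 0 && occ x 1) - b2R R (occ x 0 && occ x 1)).
Proof.
move=> hN.
rewrite (@phi_of R N kappa muL muR _ _ (muL / 2 * (1 - 2 * b2R R (occ x 0)) +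
     kappa / 2 * ((S (flip x 0))%:R - (S x)%:R))); last first.
  by move=> b; rewrite rate_flip0.
have e := congr1 (fun n : nat => n%:R : R) (S_flip0 x hN).
rewrite /= !natrD in e.
rewrite /b2R; congr (_ + _ * _); lra.
Qed.

Lemma phi_flipN x : (1 < N)%N ->
  phi kappa muL muR x (flip x N.-1) =
  muR / 2 * (1 - 2 * b2R R (occ x N.-1)) +
  kappa / 2 * (b2R R (occ x N.-2 && ~~ occ x N.-1) - b2R R (occ x N.-2 && occ x N.-1)).
Proof.
move=> hN.
rewrite (@phi_of R N kappa muL muR _ _ (muR / 2 * (1 - 2 * b2R R (occ x N.-1)) +
     kappa / 2 * ((S (flip x N.-1))%:R - (S x)%:R))); last first.
  by move=> b; rewrite rate_flipN.
have e := congr1 (fun n : nat => n%:R : R) (S_flipN x hN).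
rewrite /= !natrD in e.
rewrite /b2R; congr (_ + _ * _); lra.
Qed.

Lemma allowed_cases x y : (1 < N)%N -> allowed x y ->
  (exists j, [/\ (j.+1 < N)%N, occ x j != occ x j.+1 & y = swap x j])
  \/ y = flip x 0 \/ y = flip x N.-1.
Proof.
move=> hN /orP [/orP [/existsP [i /andP [di /eqP e]]| /eqP e] | /eqP e].
- left; exists i; split => //; by have := ltn_ord i; lia.
- by right; left.
- by right; right.
Qed.

Hypotheses (hN : (5 <= N)%N) (hk : 0 < kappa) (hL : kappa < muL) (hR : muR < 0)
  (hRk : kappa < `|muR|).

Lemma muR_lt : muR < - kappa.
Proof. by move: hRk; rewrite ltr0_norm //; lra. Qed.

Lemma x_up x i : Pfacts x ->
  ~~ up ((0 < i)%N && occ x i.-1) (occ x i) (occ x i.+1) (occ x i.+2).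
Proof.
move=> [/andP [/andP [h0 h1] h2] _ hp].
case: i => [|i] /=; first by rewrite /up h0 h1.
move: (hp i) (hp i.+1); rewrite /up /bad4.
by case: (occ x i) (occ x i.+1) (occ x i.+2) (occ x i.+3) (occ x i.+4) => [] [] [] [] [].
Qed.

Lemma x_dl x i : Pfacts x -> occ x i != occ x i.+1 ->
  dl ((0 < i)%N && occ x i.-1) (occ x i) (occ x i.+1) (occ x i.+2) = -1.
Proof.
move=> [/andP [/andP [h0 h1] h2] _ hp].
case: i => [|i] /=; first by rewrite h0 h1.
move: (hp i) (hp i.+1); rewrite /dl /bad4.
case: (occ x i) (occ x i.+1) (occ x i.+2) (occ x i.+3) (occ x i.+4) => [] [] [] [] [] //=;
  rewrite ?b2RT ?b2RF; lra.
Qed.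

Lemma x_iface x : Pfacts x -> exists i, (i.+1 < N)%N /\ occ x i != occ x i.+1.
Proof.
move=> [/andP [/andP [h0 h1] h2] /andP [hN1 hN2] hp].
have key : forall k, (k < N)%N -> occ x k \/ exists i, (i.+1 < N)%N /\ occ x i != occ x i.+1.
  elim=> [|k IH] hk'; first by left.
  case: (IH (ltnW hk')) => [hk1|]; last by right.
  case: (boolP (occ x k.+1)) => hk2; first by left.
  by right; exists k; split => //; rewrite hk1 (negPf hk2).
have : (N.-1 < N)%N by lia.
by move=> /key [h|//]; rewrite h in hN1.
Qed.

Lemma phi_x_bound x y : Pfacts x -> allowed x y ->
  phi kappa muL muR x y <= - kappa / 2 /\
  (phi kappa muL muR x y = - kappa / 2 ->
     exists j, [/\ (j.+1 < N)%N, occ x j != occ x j.+1 & y = swap x j]).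
Proof.
move=> hx hxy; have hx' := hx.
move: hx' => [/andP [/andP [h0 h1] h2] /andP [hN1 hN2] hp].
have mR := muR_lt; have hk' := hk; have hL' := hL.
have hN1' : (1 < N)%N by apply: leq_trans hN.
case: (allowed_cases x y hN1' hxy) => [[j [hj dj ->]]|[->|->]].
- rewrite phi_swap // x_dl //; split; first lra.
  by move=> _; exists j.
- rewrite phi_flip0; last by apply: leq_trans hN.
  rewrite h0 h1 /= b2RT b2RF; split; first lra.
  move=> e; exfalso; lra.
- rewrite phi_flipN; last by apply: leq_trans hN.
  rewrite (negPf hN1) (negPf hN2) /= b2RF; split; first lra.
  move=> e; exfalso; lra.
Qed.

Lemma allowed_swap x j : (j.+1 < N)%N -> occ x j != occ x j.+1 -> allowed x (swap x j).
Proof.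
move=> hj dj; apply/orP; left; apply/orP; left; apply/existsP.
have hj' : (j < N.-1)%N by move: hj; nlia.
by exists (Ordinal hj'); rewrite /= dj eqxx.
Qed.

Lemma Gamma_x x : Pfacts x -> Gamma kappa muL muR x = kappa / 2.
Proof.
move=> hx.
have [i [hi di]] := x_iface x hx.
have hk' := hk.
rewrite /Gamma (@bigmax_eq R _ _ _ _ (- kappa / 2) (swap x i)).
- lra.
- apply: (proj1 (phi_x_bound x _ hx _)).
  by apply/orP; left; apply/orP; right.
- by move=> y hy; exact: (proj1 (phi_x_bound x y hx hy)).
- exact: allowed_swap.
- rewrite phi_swap // x_dl //; lra.
Qed.


Lemma near_bool (q A0 A1 A2 A3 A4 A5 A6 : bool) :
  ~~ bad4 A0 A1 A2 A3 -> ~~ bad4 A1 A2 A3 A4 -> ~~ bad4 A2 A3 A4 A5 -> A2 != A3 ->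
  [&& ~~ up q A0 A1 A3, ~~ up A0 A1 A3 A2, ~~ up A3 A2 A4 A5 & ~~ up A2 A4 A5 A6].
Proof.
by rewrite /bad4 /up; case: q; case: A0; case: A1; case: A2; case: A3; case: A4;
  case: A5; case: A6.
Qed.

Lemma occ_swap_far x j k : (j.+1 < N)%N -> k != j -> k != j.+1 ->
  occ (swap x j) k = occ x k.
Proof. by move=> hj /negPf h1 /negPf h2; rewrite occ_swap // h1 h2. Qed.

Lemma iface_pos x j : Pfacts x -> occ x j != occ x j.+1 -> (2 <= j)%N.
Proof.
move=> [/andP [/andP [h0 h1] h2] _ _].
by case: j => [|[|j]] //; rewrite ?h0 ?h1 ?h2.
Qed.

Lemma iface_end x j : Pfacts x -> (j.+1 < N)%N -> occ x j != occ x j.+1 -> (j.+2 < N)%N.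
Proof.
move=> [_ /andP [hN1 hN2] _] hj dj.
case: (ltnP j.+2 N) => // h.
have e1 : j = N.-2 by move: hj h; nlia.
have e2 : j.+1 = N.-1 by move: hj h; nlia.
by move: dj; rewrite e2 e1 (negPf hN1) (negPf hN2).
Qed.

Lemma x_E x j : in_calP x -> (j.+1 < N)%N -> occ x j != occ x j.+1 ->
  in_calE (swap x j).
Proof.
move=> hP hj dj.
have hx := calP_facts x hP.
have j2 := iface_pos x j hx dj.
have j3 := iface_end x j hx hj dj.
move: hx => [_ _ hp].
exists x; split => //; exists j.
case: j j2 j3 hj dj => [|[|m]] // _ j3 hj dj.
rewrite !subSS !subn0.
have B : forall P : bool -> bool -> bool -> bool -> bool -> bool -> Prop,
   (forall a0 a1 a2 a3 a4 a5, ~~ bad4 a0 a1 a2 a3 -> ~~ bad4 a1 a2 a3 a4 ->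
       ~~ bad4 a2 a3 a4 a5 -> a2 != a3 -> P a0 a1 a2 a3 a4 a5) ->
   P (occ x m) (occ x m.+1) (occ x m.+2) (occ x m.+3) (occ x m.+4) (occ x m.+4.+1).
  by move=> P HP; apply: HP => //.
case: (boolP (occ x m.+2)) => h2.
  left; split => //; first by move: j3; nlia.
  move: h2.
  refine (B (fun a0 a1 a2 a3 a4 _ => a2 -> [&& a0, a1, true, ~~ a3 & ~~ a4]) _).
  by move=> a0 a1 a2 a3 a4 a5; rewrite /bad4; case: a0; case: a1; case: a2; case: a3; case: a4; case: a5.
have h5 : occ x m.+4.+1.
  move: h2.
  refine (B (fun a0 a1 a2 a3 a4 a5 => ~~ a2 -> a5) _).
  by move=> a0 a1 a2 a3 a4 a5; rewrite /bad4; case: a0; case: a1; case: a2; case: a3; case: a4; case: a5.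
right; split => //.
  by case: (ltnP m.+4.+1 N) => h; [move: h; nlia | rewrite occ_ge in h5].
move: h2.
refine (B (fun a0 a1 a2 a3 a4 a5 => ~~ a2 -> [&& ~~ a0, ~~ a1, ~~ false, a3, a4 & a5]) _).
by move=> a0 a1 a2 a3 a4 a5; rewrite /bad4; case: a0; case: a1; case: a2; case: a3; case: a4; case: a5.
Qed.


Lemma dl_swap p u v w : dl p v u w = - dl p u v w.
Proof. by rewrite /dl; case: p; case: u; case: v; case: w; rewrite /= ?b2RT ?b2RF; lra. Qed.

Lemma swap_swap x j : (j.+1 < N)%N -> swap (swap x j) j = x.
Proof.
move=> hj; apply: config_eq => k hk0.
rewrite !occ_swap //; case: eqVneq => [->|/negPf e1]; first by rewrite eqxx (gtn_eqF (ltnSn j)).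
case: eqVneq => [->|//]; by rewrite eqxx.
Qed.

Lemma y_iface x j : (j.+1 < N)%N -> occ x j != occ x j.+1 ->
  occ (swap x j) j != occ (swap x j) j.+1.
Proof.
by move=> hj dj; rewrite !occ_swap // eqxx (gtn_eqF (ltnSn j)) eqxx eq_sym.
Qed.

Lemma phi_back x j : Pfacts x -> (j.+1 < N)%N -> occ x j != occ x j.+1 ->
  phi kappa muL muR (swap x j) x = kappa / 2.
Proof.
move=> hx hj dj.
have j2 := iface_pos x j hx dj.
rewrite -{2}(swap_swap x j hj) phi_swap //; last exact: y_iface.
rewrite !occ_swap // eqxx (gtn_eqF (ltnSn j)) eqxx.
have -> : (j.-1 == j) = false by apply/eqP; move: j2; nlia.
have -> : (j.-1 == j.+1) = false by apply/eqP; move: j2; nlia.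
have -> : (j.+2 == j) = false by apply/eqP; move: j2; nlia.
have -> : (j.+2 == j.+1) = false by apply/eqP; move: j2; nlia.
by rewrite dl_swap x_dl //; lra.
Qed.


End Main.

Lemma up_only N (x : config N) m i : Pfacts x -> (m.+3 < N)%N ->
  occ x m.+2 != occ x m.+3 -> (i.+1 < N)%N ->
  up ((0 < i)%N && occ (swap x m.+2) i.-1) (occ (swap x m.+2) i)
     (occ (swap x m.+2) i.+1) (occ (swap x m.+2) i.+2) -> i = m.+2.
Proof.
move=> hx hj dj hi U.
have hx' := hx; move: hx' => [_ _ hp].
have F : forall k, (k < m.+2)%N \/ (m.+3 < k)%N -> occ (swap x m.+2) k = occ x k.
  by move=> k hk0; apply: occ_swap_far => //; apply/eqP; move: hk0; nlia.
have NB := near_bool ((0 < m)%N && occ x m.-1) _ _ _ _ _ _ (occ x m.+4.+2) (hp m) (hp m.+1) (hp m.+2) dj.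
move/and4P: NB => [n1 n2 n3 n4].
have Fj : occ (swap x m.+2) m.+2 = occ x m.+3 by rewrite occ_swap // eqxx.
have Fj1 : occ (swap x m.+2) m.+3 = occ x m.+2
  by rewrite occ_swap // (gtn_eqF (ltnSn _)) eqxx.
case: (boolP ((i < m) || (m.+4 < i))%N) => hfar.
  exfalso.
  have Fp : (0 < i)%N && occ (swap x m.+2) i.-1 = (0 < i)%N && occ x i.-1.
    case: i hi U hfar => [//|i'] hi U hfar /=.
    by rewrite F //; move: hfar; nlia.
  rewrite Fp (F i) ?(F i.+1) ?(F i.+2) in U; try (move: hfar; nlia).
  by have := x_up _ x i hx; rewrite U.
have Fq : (0 < m)%N && occ (swap x m.+2) m.-1 = (0 < m)%N && occ x m.-1.
  move: hj; clear; case: m => [//|m'] hj /=.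
  by rewrite occ_swap_far //; apply/eqP; nlia.
have : i = m \/ i = m.+1 \/ i = m.+2 \/ i = m.+3 \/ i = m.+4 by move: hfar; nlia.
case=> [ei|[ei|[ei|[ei|ei]]]]; subst i => //; exfalso;
  (rewrite /= ?Fq ?Fj ?Fj1 ?(F m) ?(F m.+1) ?(F m.+4) ?(F m.+4.+1) ?(F m.+4.+2) in U; try nlia);
  first [by rewrite U in n1 | by rewrite U in n2 | by rewrite U in n3 | by rewrite U in n4].
Qed.

Section Main2.
Variables (R : realType) (N : nat) (kappa muL muR : R).
Hypotheses (hN : (5 <= N)%N) (hk : 0 < kappa) (hL : kappa < muL) (hR : muR < 0)
  (hRk : kappa < `|muR|).
Implicit Types x y : config N.

Lemma y_bound x j z : Pfacts x -> (j.+1 < N)%N -> occ x j != occ x j.+1 ->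
  allowed (swap x j) z ->
  phi kappa muL muR (swap x j) z <= kappa / 2 /\
  (phi kappa muL muR (swap x j) z = kappa / 2 -> z = x).
Proof.
move=> hx hj dj hz.
have j2 := iface_pos _ x j hx dj.
have j3 := iface_end _ x j hx hj dj.
have [m em] : exists m, j = m.+2 by exists j.-2; move: j2; nlia.
subst j.
have hN1' : (1 < N)%N by apply: leq_trans hN.
have e0 : occ (swap x m.+2) 0 = occ x 0 by apply: occ_swap_far.
have e1 : occ (swap x m.+2) 1 = occ x 1 by apply: occ_swap_far.
have eN1 : occ (swap x m.+2) N.-1 = occ x N.-1 by apply: occ_swap_far => //; apply/eqP; move: j3; nlia.
have hx' := hx; move: hx' => [/andP [/andP [h0 h1] h2] /andP [hN1 hN2] hp].
have mR : muR < - kappa by move: hRk; rewrite ltr0_norm //; lra.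
 have hk' := hk; have hL' := hL.
have hk2 : 0 < kappa / 2 by lra.
case: (allowed_cases _ _ z hN1' hz) => [[i [hi di ->]]|[->|->]].
- rewrite phi_swap //.
  have le1 := dl_le1 _ _ _ _ _ di.
  split.
    by rewrite -[X in _ <= X]mulr1; apply: ler_wpM2l; [exact: ltW | exact: le1].
  move=> e.
  have d1 : dl R ((0 < i)%N && occ (swap x m.+2) i.-1) (occ (swap x m.+2) i)
     (occ (swap x m.+2) i.+1) (occ (swap x m.+2) i.+2) = 1.
    apply: (mulfI (x := kappa / 2)); first by apply: lt0r_neq0.
    by rewrite e mulr1.
  have U := dl_eq1 _ _ _ _ _ d1.
  by rewrite (up_only _ _ _ _ hx hj dj hi U) swap_swap.
- rewrite phi_flip0 // e0 e1 h0 h1 /= b2RT b2RF; split; first lra.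
  move=> e; exfalso; lra.
- rewrite phi_flipN // eN1 (negPf hN1) /= ?andbT ?andbF ?b2RF.
  case: (occ (swap x m.+2) N.-2); rewrite ?b2RT ?b2RF; (split; first lra); move=> e; exfalso; lra.
Qed.

End Main2.

Theorem lemma1 (R : realType) (N : nat) (kappa muL muR : R)
  (hN : (5 <= N)%N) (hkappa : 0 < kappa) (hL : kappa < muL) (hR : muR < 0)
  (hRk : kappa < `|muR|) (x y : config N) :
  in_calP x -> allowed x y -> U kappa muL muR x y = 0 ->
  in_calE y /\
  (forall z : config N, allowed y z -> U kappa muL muR y z = 0 -> z = x).
Proof.
move=> hP hxy hU.
have hx := calP_facts x hP.
have G : Gamma kappa muL muR x = kappa / 2 by apply: Gamma_x.
have ephi : phi kappa muL muR x y = - kappa / 2.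
  by move: hU; rewrite /U G; lra.
have [_ hcase] := phi_x_bound R N kappa muL muR hN hkappa hL hR hRk x y hx hxy.
have [j [hj dj ey]] := hcase ephi.
subst y.
split; first exact: (x_E _ x j hP hj dj).
move=> z hz hUz.
have hN1 : (1 < N)%N by apply: leq_trans hN.
have Gy : Gamma kappa muL muR (swap x j) = - (kappa / 2).
  rewrite /Gamma (@bigmax_eq R _ _ _ _ (kappa / 2) x) //.
  - apply: (proj1 (y_bound R N kappa muL muR hN hkappa hL hR hRk x j _ hx hj dj _)).
    by apply/orP; left; apply/orP; right.
  - by move=> w hw; exact: (proj1 (y_bound R N kappa muL muR hN hkappa hL hR hRk x j w hx hj dj hw)).
  - rewrite -{2}(swap_swap _ x j hj); apply: allowed_swap => //.
    exact: y_iface.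
  - by apply: phi_back.
have e : phi kappa muL muR (swap x j) z = kappa / 2.
  by move: hUz; rewrite /U Gy; lra.
exact: (proj2 (y_bound R N kappa muL muR hN hkappa hL hR hRk x j z hx hj dj hz) e).
Qed.
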